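(* Let $I\subseteq\mathbb{R}$ be an interval, $\phi:I\times\mathbb{R}^2\to\mathbb{C}$ a smooth function and $\widetilde{A}=\widetilde{A}_tdt+\widetilde{A}_1dx^1+\widetilde{A}_2dx^2$ a smooth real-valued $1$-form on $I\times\mathbb{R}^2$, with covariant derivatives $\widetilde{\mathbf{D}}_\alpha=\partial_\alpha+i\widetilde{A}_\alpha$ and curvature $\widetilde F=d\widetilde A$. Suppose $$\widetilde F_{t\bar z}=\bar\phi\,\widetilde{\mathbf{D}}_{\bar z}\phi,\qquad \widetilde F_{z\bar z}=\tfrac{1}{4i}|\phi|^2,\qquad i\widetilde{\mathbf{D}}_t\phi+4\widetilde{\mathbf{D}}_z\widetilde{\mathbf{D}}_{\bar z}\phi=0.$$ Then $$i\widetilde{\mathbf{D}}_t\widetilde{\mathbf{D}}_{\bar z}\phi+4\widetilde{\mathbf{D}}_z\widetilde{\mathbf{D}}_{\bar z}\widetilde{\mathbf{D}}_{\bar z}\phi=0,$$ $$i\widetilde{\mathbf{D}}_t\widetilde{\mathbf{D}}_{\bar z}\widetilde{\mathbf{D}}_{\bar z}\phi+4\widetilde{\mathbf{D}}_{\bar z}\widetilde{\mathbf{D}}_z\widetilde{\mathbf{D}}_{\bar z}\widetilde{\mathbf{D}}_{\bar z}\phi+\bar\phi\,(\widetilde{\mathbf{D}}_{\bar z}\phi)^2=0.$$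
   Context: Wirtinger derivatives: $\partial_z=\frac12\partial_1+\frac1{2i}\partial_2$, $\partial_{\bar z}=\frac12\partial_1-\frac1{2i}\partial_2$; correspondingly $\widetilde A_z=\frac12\widetilde A_1+\frac1{2i}\widetilde A_2$, $\widetilde A_{\bar z}=\frac12\widetilde A_1-\frac1{2i}\widetilde A_2$, $\widetilde{\mathbf{D}}_z=\partial_z+i\widetilde A_z$, $\widetilde{\mathbf{D}}_{\bar z}=\partial_{\bar z}+i\widetilde A_{\bar z}$. Curvature components: $\widetilde F_{t\bar z}=\widetilde F(\partial_t,\partial_{\bar z})=\frac12\widetilde F_{t1}-\frac1{2i}\widetilde F_{t2}$ and $\widetilde F_{z\bar z}=\widetilde F(\partial_z,\partial_{\bar z})=-\frac1{2i}\widetilde F_{12}$, where $\widetilde F_{\alpha\beta}=\partial_\alpha\widetilde A_\beta-\partial_\beta\widetilde A_\alpha$. *)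

(* Defs.v *)
From Stdlib Require Import Reals ClassicalEpsilon List.
From Coquelicot Require Import Complex.
Open Scope R_scope.

Definition is_interval (I : R -> Prop) : Prop :=
  (forall a b c, I a -> I c -> a <= b <= c -> I b) /\
  (exists a b, a < b /\ I a /\ I b).

(* l is the derivative at t of f restricted to D (one-sided at endpoints of an interval). *)
Definition has_deriv_within (D : R -> Prop) (f : R -> R) (t l : R) : Prop :=
  forall eps, 0 < eps -> exists delta, 0 < delta /\
    forall s, D s -> 0 < Rabs (s - t) < delta ->
      Rabs ((f s - f t) / (s - t) - l) < eps.

Definition deriv_within (D : R -> Prop) (f : R -> R) (t : R) : R :=
  match excluded_middle_informative (exists l, has_deriv_within D f t l) with
  | left H => proj1_sig (constructive_indefinite_description _ H)
  | right _ => 0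
  end.

Inductive dir := Dt | D1 | D2.

Definition fullR : R -> Prop := fun _ => True.

Definition dom_of (I : R -> Prop) (d : dir) : R -> Prop :=
  match d with Dt => I | _ => fullR end.

Definition section (d : dir) (f : R -> R -> R -> R) (t x y : R) : R -> R :=
  match d with
  | Dt => fun s => f s x y
  | D1 => fun s => f t s y
  | D2 => fun s => f t x s
  end.

Definition coord (d : dir) (t x y : R) : R :=
  match d with Dt => t | D1 => x | D2 => y end.

Definition partial (I : R -> Prop) (d : dir) (f : R -> R -> R -> R) : R -> R -> R -> R :=
  fun t x y => deriv_within (dom_of I d) (section d f t x y) (coord d t x y).

Definition iter_partial (I : R -> Prop) (w : list dir) (f : R -> R -> R -> R)
  : R -> R -> R -> R := fold_right (partial I) f w.

Definition continuous_on_dom (I : R -> Prop) (g : R -> R -> R -> R) : Prop :=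
  forall t x y, I t -> forall eps, 0 < eps -> exists delta, 0 < delta /\
    forall t' x' y', I t' -> Rabs (t' - t) < delta -> Rabs (x' - x) < delta ->
      Rabs (y' - y) < delta -> Rabs (g t' x' y' - g t x y) < eps.

Definition smooth_on (I : R -> Prop) (f : R -> R -> R -> R) : Prop :=
  forall w : list dir,
    continuous_on_dom I (iter_partial I w f) /\
    forall d t x y, I t ->
      exists l, has_deriv_within (dom_of I d) (section d (iter_partial I w f) t x y)
                  (coord d t x y) l.

Definition smoothC_on (I : R -> Prop) (g : R -> R -> R -> C) : Prop :=
  smooth_on I (fun t x y => fst (g t x y)) /\ smooth_on I (fun t x y => snd (g t x y)).

Definition cpartial (I : R -> Prop) (d : dir) (g : R -> R -> R -> C) : R -> R -> R -> C :=
  fun t x y => (partial I d (fun t x y => fst (g t x y)) t x y,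
                partial I d (fun t x y => snd (g t x y)) t x y).

Open Scope C_scope.

Definition Acomp (At A1 A2 : R -> R -> R -> R) (d : dir) : R -> R -> R -> R :=
  match d with Dt => At | D1 => A1 | D2 => A2 end.

Definition covD (I : R -> Prop) (At A1 A2 : R -> R -> R -> R) (d : dir)
  (psi : R -> R -> R -> C) : R -> R -> R -> C :=
  fun t x y => cpartial I d psi t x y + Ci * RtoC (Acomp At A1 A2 d t x y) * psi t x y.

Definition covDz (I : R -> Prop) (At A1 A2 : R -> R -> R -> R)
  (psi : R -> R -> R -> C) : R -> R -> R -> C :=
  fun t x y => / RtoC 2 * covD I At A1 A2 D1 psi t x y
             + / (RtoC 2 * Ci) * covD I At A1 A2 D2 psi t x y.

Definition covDzb (I : R -> Prop) (At A1 A2 : R -> R -> R -> R)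
  (psi : R -> R -> R -> C) : R -> R -> R -> C :=
  fun t x y => / RtoC 2 * covD I At A1 A2 D1 psi t x y
             - / (RtoC 2 * Ci) * covD I At A1 A2 D2 psi t x y.

Definition curv (I : R -> Prop) (At A1 A2 : R -> R -> R -> R) (a b : dir)
  : R -> R -> R -> R :=
  fun t x y => (partial I a (Acomp At A1 A2 b) t x y - partial I b (Acomp At A1 A2 a) t x y)%R.

Definition F_tzb (I : R -> Prop) (At A1 A2 : R -> R -> R -> R) : R -> R -> R -> C :=
  fun t x y => / RtoC 2 * RtoC (curv I At A1 A2 Dt D1 t x y)
             - / (RtoC 2 * Ci) * RtoC (curv I At A1 A2 Dt D2 t x y).

Definition F_zzb (I : R -> Prop) (At A1 A2 : R -> R -> R -> R) : R -> R -> R -> C :=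
  fun t x y => - (/ (RtoC 2 * Ci) * RtoC (curv I At A1 A2 D1 D2 t x y)).

(* Main.v *)
Require Import Defs.
From Stdlib Require Import Reals.
From Coquelicot Require Import Complex.
From Stdlib Require Import Reals Lra List ClassicalEpsilon.
From Coquelicot Require Import Coquelicot.
Open Scope R_scope.

Lemma Rabs3 (x y z : R) : Rabs (x + y + z) <= Rabs x + Rabs y + Rabs z.
Proof.
  eapply Rle_trans. apply Rabs_triang.
  pose proof (Rabs_triang x y). lra.
Qed.

Lemma mult_near (a0 b0 eps : R) : 0 < eps -> exists d, 0 < d /\
  forall a b, Rabs (a - a0) < d -> Rabs (b - b0) < d -> Rabs (a*b - a0*b0) < eps.
Proof.
  intros He.
  pose proof (Rabs_pos a0). pose proof (Rabs_pos b0).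
  set (M := Rabs a0 + Rabs b0 + 1).
  assert (HM: 0 < M) by (unfold M; lra).
  exists (Rmin 1 (eps / M)). split.
  - apply Rmin_pos; [lra| apply Rdiv_lt_0_compat; lra].
  - intros a b Ha Hb.
    assert (Hd1 := Rmin_l 1 (eps/M)). assert (Hd2 := Rmin_r 1 (eps/M)).
    set (d := Rmin 1 (eps/M)) in *.
    assert (HdM : d * M <= eps).
    { apply Rmult_le_compat_r with (r := M) in Hd2; [|lra].
      unfold Rdiv in Hd2. rewrite Rmult_assoc, Rinv_l in Hd2; lra. }
    replace (a*b - a0*b0) with ((a-a0)*(b-b0) + a0*(b-b0) + b0*(a-a0)) by ring.
    eapply Rle_lt_trans. apply Rabs3.
    rewrite !Rabs_mult.
    pose proof (Rabs_pos (a-a0)). pose proof (Rabs_pos (b-b0)).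
    unfold M in HdM.
    nra.
Qed.

Definition Lim (D : R -> Prop) (c : R) (h : R -> R) (L : R) : Prop :=
  forall eps, 0 < eps -> exists delta, 0 < delta /\
    forall s, D s -> 0 < Rabs (s - c) < delta -> Rabs (h s - L) < eps.

Lemma hd_Lim D f c l : has_deriv_within D f c l <-> Lim D c (fun s => (f s - f c) / (s - c)) l.
Proof. reflexivity. Qed.

Lemma Lim_const D c L : Lim D c (fun _ => L) L.
Proof. intros eps He. exists 1. split; [lra|]. intros. rewrite Rminus_diag, Rabs_R0. lra. Qed.

Lemma Lim_id D c : Lim D c (fun s => s) c.
Proof. intros eps He. exists eps. split; [lra|]. intros. lra. Qed.

Lemma Lim_ext D c h1 h2 L1 L2 : (forall s, D s -> s <> c -> h1 s = h2 s) -> L1 = L2 ->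
  Lim D c h1 L1 -> Lim D c h2 L2.
Proof.
  intros Hh HL H eps He. destruct (H eps He) as [d [Hd Hs]]. exists d. split; auto.
  intros s Ds Hsd. rewrite <- Hh, <- HL; auto.
  intro E. subst. rewrite Rminus_diag, Rabs_R0 in Hsd. lra.
Qed.

Lemma Lim_plus D c h1 h2 L1 L2 : Lim D c h1 L1 -> Lim D c h2 L2 ->
  Lim D c (fun s => h1 s + h2 s) (L1 + L2).
Proof.
  intros H1 H2 eps He.
  destruct (H1 (eps/2)) as [d1 [Hd1 Hs1]]; [lra|].
  destruct (H2 (eps/2)) as [d2 [Hd2 Hs2]]; [lra|].
  exists (Rmin d1 d2). split; [apply Rmin_pos; auto|].
  intros s Ds Hsd.
  assert (Hm1 := Rmin_l d1 d2). assert (Hm2 := Rmin_r d1 d2).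
  specialize (Hs1 s Ds ltac:(lra)). specialize (Hs2 s Ds ltac:(lra)).
  replace (h1 s + h2 s - (L1 + L2)) with ((h1 s - L1) + (h2 s - L2)) by ring.
  eapply Rle_lt_trans. apply Rabs_triang. lra.
Qed.

Lemma Lim_mult D c h1 h2 L1 L2 : Lim D c h1 L1 -> Lim D c h2 L2 ->
  Lim D c (fun s => h1 s * h2 s) (L1 * L2).
Proof.
  intros H1 H2 eps He.
  destruct (mult_near L1 L2 eps He) as [d [Hd Hm]].
  destruct (H1 d Hd) as [d1 [Hd1 Hs1]].
  destruct (H2 d Hd) as [d2 [Hd2 Hs2]].
  exists (Rmin d1 d2). split; [apply Rmin_pos; auto|].
  intros s Ds Hsd.
  assert (Hm1 := Rmin_l d1 d2). assert (Hm2 := Rmin_r d1 d2).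
  apply Hm; [apply Hs1|apply Hs2]; auto; lra.
Qed.

Lemma hd_cont D g c lg : has_deriv_within D g c lg -> Lim D c g (g c).
Proof.
  intros H.
  assert (H2 : Lim D c (fun s => g c + (g s - g c) / (s - c) * (s - c)) (g c + lg * (c - c))).
  { apply Lim_plus. apply Lim_const. apply Lim_mult. exact H.
    apply (Lim_plus _ _ (fun s => s) (fun _ => - c) c (-c)). apply Lim_id. apply Lim_const. }
  eapply Lim_ext; [| | exact H2].
  - intros s _ Hs. cbv beta. field. intro E. apply Hs. lra.
  - ring.
Qed.

Lemma hd_plus D f g c lf lg : has_deriv_within D f c lf -> has_deriv_within D g c lg ->
  has_deriv_within D (fun s => f s + g s) c (lf + lg).
Proof.
  intros Hf Hg. apply hd_Lim.
  eapply Lim_ext; [| | exact (Lim_plus _ _ _ _ _ _ Hf Hg)].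
  - intros s _ Hs. simpl. field. intro E. apply Hs. lra.
  - reflexivity.
Qed.

Lemma hd_mult D f g c lf lg : has_deriv_within D f c lf -> has_deriv_within D g c lg ->
  has_deriv_within D (fun s => f s * g s) c (lf * g c + f c * lg).
Proof.
  intros Hf Hg. apply hd_Lim.
  assert (Hgc := hd_cont _ _ _ _ Hg).
  eapply Lim_ext; [| | exact (Lim_plus _ _ _ _ _ _ (Lim_mult _ _ _ _ _ _ Hf Hgc)
                                 (Lim_mult _ _ _ _ _ _ (Lim_const D c (f c)) Hg))].
  - intros s _ Hs. simpl. field. intro E. apply Hs. lra.
  - reflexivity.
Qed.

Lemma hd_const D c k : has_deriv_within D (fun _ => k) c 0.
Proof.
  apply hd_Lim. eapply Lim_ext; [| | apply (Lim_const D c 0)].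
  - intros s _ Hs. simpl. field. intro E. apply Hs. lra.
  - reflexivity.
Qed.

Lemma hd_ext D f g c l : D c -> (forall s, D s -> f s = g s) ->
  has_deriv_within D f c l -> has_deriv_within D g c l.
Proof.
  intros Dc Hfg H. apply hd_Lim in H. apply hd_Lim.
  eapply Lim_ext; [| | exact H]; [|reflexivity].
  intros s Ds _. rewrite !Hfg; auto.
Qed.

Lemma small_zero a : (forall eps, 0 < eps -> Rabs a < eps) -> a = 0.
Proof.
  intros H. destruct (Req_dec a 0) as [E|E]; auto.
  assert (0 < Rabs a) by (apply Rabs_pos_lt; auto).
  specialize (H _ H0). lra.
Qed.

Definition perfect (D : R -> Prop) (c : R) :=
  forall delta, 0 < delta -> exists s, D s /\ 0 < Rabs (s - c) < delta.

Lemma Lim_unique D c h L1 L2 : perfect D c -> Lim D c h L1 -> Lim D c h L2 -> L1 = L2.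
Proof.
  intros P H1 H2.
  apply Rminus_diag_uniq. apply small_zero. intros eps He.
  destruct (H1 (eps/2)) as [d1 [Hd1 Hs1]]; [lra|].
  destruct (H2 (eps/2)) as [d2 [Hd2 Hs2]]; [lra|].
  destruct (P (Rmin d1 d2)) as [s [Ds Hs]]; [apply Rmin_pos; auto|].
  assert (Hm1 := Rmin_l d1 d2). assert (Hm2 := Rmin_r d1 d2).
  specialize (Hs1 s Ds ltac:(lra)). specialize (Hs2 s Ds ltac:(lra)).
  replace (L1 - L2) with (-(h s - L1) + (h s - L2)) by ring.
  eapply Rle_lt_trans. apply Rabs_triang. rewrite Rabs_Ropp. lra.
Qed.

Lemma deriv_within_val D f c l : perfect D c -> has_deriv_within D f c l -> deriv_within D f c = l.
Proof.
  intros P H. unfold deriv_within.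
  destruct (excluded_middle_informative (exists l0, has_deriv_within D f c l0)) as [E|E].
  - destruct (constructive_indefinite_description _ E) as [l' Hl']. simpl.
    exact (Lim_unique D c (fun s => (f s - f c)/(s-c)) l' l P Hl' H).
  - exfalso; apply E. exists l; exact H.
Qed.

Definition interior (I : R -> Prop) (s : R) := exists r, 0 < r /\ forall z, Rabs (z - s) < r -> I z.

Lemma approx_int I c delta : is_interval I -> I c -> 0 < delta ->
  exists s, interior I s /\ 0 < Rabs (s - c) < delta.
Proof.
  intros [Hconv [a [b [Hab [Ia Ib]]]]] Ic Hd.
  destruct (Rlt_le_dec c b) as [Hcb|Hcb].
  - set (h := Rmin delta (b - c) / 2).
    assert (Hh1 := Rmin_l delta (b-c)). assert (Hh2 := Rmin_r delta (b-c)).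
    assert (0 < Rmin delta (b-c)) by (apply Rmin_pos; lra).
    exists (c + h). split.
    + exists h. split. unfold h; lra. intros z Hz.
      apply Rabs_def2 in Hz. apply (Hconv c z b); auto. unfold h in *; lra.
    + replace (c + h - c) with h by ring. rewrite Rabs_pos_eq; unfold h in *; lra.
  - set (h := Rmin delta (c - a) / 2).
    assert (Hh1 := Rmin_l delta (c-a)). assert (Hh2 := Rmin_r delta (c-a)).
    assert (0 < Rmin delta (c-a)) by (apply Rmin_pos; lra).
    exists (c - h). split.
    + exists h. split. unfold h; lra. intros z Hz.
      apply Rabs_def2 in Hz. apply (Hconv a z c); auto. unfold h in *; lra.
    + replace (c - h - c) with (-h) by ring. rewrite Rabs_Ropp, Rabs_pos_eq; unfold h in *; lra.
Qed.

Lemma perfect_I I c : is_interval I -> I c -> perfect I c.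
Proof.
  intros HI Ic delta Hd. destruct (approx_int I c delta HI Ic Hd) as [s [[r [Hr Hs]] Hsc]].
  exists s. split; auto. apply Hs. rewrite Rminus_diag, Rabs_R0; auto.
Qed.

Lemma perfect_full c : perfect fullR c.
Proof.
  intros delta Hd. exists (c + delta/2). split. exact I.
  replace (c + delta/2 - c) with (delta/2) by ring. rewrite Rabs_pos_eq; lra.
Qed.

Lemma interior_deriv I h u l : interior I u -> has_deriv_within I h u l -> is_derive h u l.
Proof.
  intros [r [Hr HI]] H. apply is_derive_Reals. intros eps He.
  destruct (H eps He) as [d [Hd Hs]].
  assert (0 < Rmin d r) by (apply Rmin_pos; auto).
  exists (mkposreal _ H0). intros k Hk Hkd. simpl in Hkd.
  assert (Hm1 := Rmin_l d r). assert (Hm2 := Rmin_r d r).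
  specialize (Hs (u + k)). replace (u + k - u) with k in Hs by ring.
  apply Hs. apply HI. replace (u + k - u) with k by ring. lra.
  split. apply Rabs_pos_lt; auto. lra.
Qed.

Lemma full_deriv h u l : has_deriv_within fullR h u l -> is_derive h u l.
Proof.
  intros H. apply (interior_deriv fullR); auto. exists 1. split. lra. intros; exact I.
Qed.
Definition eqD (I : R -> Prop) (f g : R -> R -> R -> R) := forall t x y, I t -> f t x y = g t x y.

Lemma dom_in I d t x y : I t -> dom_of I d (coord d t x y).
Proof. destruct d; simpl; auto; constructor. Qed.

Lemma perfect_dom I d t x y : is_interval I -> I t -> perfect (dom_of I d) (coord d t x y).
Proof. destruct d; simpl; intros; auto using perfect_I, perfect_full. Qed.

Lemma section_dom I d f g t x y : eqD I f g -> I t -> forall s, dom_of I d s ->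
  section d f t x y s = section d g t x y s.
Proof. destruct d; simpl; intros; apply H; auto. Qed.

Lemma section_coord d f t x y : section d f t x y (coord d t x y) = f t x y.
Proof. destruct d; reflexivity. Qed.

Lemma partial_val I d f t x y l : is_interval I -> I t ->
  has_deriv_within (dom_of I d) (section d f t x y) (coord d t x y) l -> partial I d f t x y = l.
Proof. intros. unfold partial. apply deriv_within_val; auto using perfect_dom. Qed.

Definition Dif I d f := forall t x y, I t -> exists l,
  has_deriv_within (dom_of I d) (section d f t x y) (coord d t x y) l.

Lemma partial_spec I d f t x y : is_interval I -> Dif I d f -> I t ->
  has_deriv_within (dom_of I d) (section d f t x y) (coord d t x y) (partial I d f t x y).
Proof. intros HI Hd It. destruct (Hd t x y It) as [l Hl]. rewrite (partial_val I d f t x y l); auto. Qed.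

Lemma Dif_cong I d f g : eqD I f g -> Dif I d f -> Dif I d g.
Proof.
  intros E H t x y It. destruct (H t x y It) as [l Hl]. exists l.
  eapply hd_ext; [apply dom_in; auto| |exact Hl].
  apply section_dom; auto.
Qed.

Lemma eqD_sym I f g : eqD I f g -> eqD I g f.
Proof. intros H t x y It. symmetry. auto. Qed.

Lemma eqD_trans I f g h : eqD I f g -> eqD I g h -> eqD I f h.
Proof. intros H1 H2 t x y It. rewrite H1; auto. Qed.

Lemma eqD_refl I f : eqD I f f.
Proof. intros t x y It. reflexivity. Qed.

Lemma partial_cong I d f g : is_interval I -> eqD I f g -> eqD I (partial I d f) (partial I d g).
Proof.
  intros HI E t x y It.
  destruct (classic (exists l, has_deriv_within (dom_of I d) (section d f t x y) (coord d t x y) l))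
    as [[l Hl]|N].
  - rewrite (partial_val I d f t x y l); auto.
    symmetry. apply partial_val; auto.
    eapply hd_ext; [apply dom_in; auto| |exact Hl]. apply section_dom; auto.
  - unfold partial, deriv_within.
    destruct (excluded_middle_informative (exists l, has_deriv_within (dom_of I d) (section d f t x y) (coord d t x y) l)) as [E1|E1]; [contradiction|].
    destruct (excluded_middle_informative (exists l, has_deriv_within (dom_of I d) (section d g t x y) (coord d t x y) l)) as [E2|E2]; auto.
    exfalso. apply N. destruct E2 as [l Hl]. exists l.
    eapply hd_ext; [apply dom_in; auto| |exact Hl]. apply section_dom; auto using eqD_sym.
Qed.

Lemma Dif_plus I d f g : Dif I d f -> Dif I d g -> Dif I d (fun t x y => f t x y + g t x y).
Proof.
  intros Hf Hg t x y It. destruct (Hf t x y It) as [lf Hlf]. destruct (Hg t x y It) as [lg Hlg].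
  exists (lf + lg).
  replace (section d (fun t x y => f t x y + g t x y) t x y) with
    (fun s => section d f t x y s + section d g t x y s) by (destruct d; reflexivity).
  apply hd_plus; auto.
Qed.

Lemma Dif_mult I d f g : Dif I d f -> Dif I d g -> Dif I d (fun t x y => f t x y * g t x y).
Proof.
  intros Hf Hg t x y It. destruct (Hf t x y It) as [lf Hlf]. destruct (Hg t x y It) as [lg Hlg].
  eexists.
  replace (section d (fun t x y => f t x y * g t x y) t x y) with
    (fun s => section d f t x y s * section d g t x y s) by (destruct d; reflexivity).
  apply hd_mult; eauto.
Qed.

Lemma Dif_const I d k : Dif I d (fun _ _ _ => k).
Proof.
  intros t x y It. exists 0.
  replace (section d (fun _ _ _ => k) t x y) with (fun _ : R => k) by (destruct d; reflexivity).
  apply hd_const.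
Qed.

Lemma partial_plus I d f g : is_interval I -> Dif I d f -> Dif I d g ->
  eqD I (partial I d (fun t x y => f t x y + g t x y))
        (fun t x y => partial I d f t x y + partial I d g t x y).
Proof.
  intros HI Hf Hg t x y It. apply partial_val; auto.
  replace (section d (fun t x y => f t x y + g t x y) t x y) with
    (fun s => section d f t x y s + section d g t x y s) by (destruct d; reflexivity).
  apply hd_plus; apply partial_spec; auto.
Qed.

Lemma partial_mult I d f g : is_interval I -> Dif I d f -> Dif I d g ->
  eqD I (partial I d (fun t x y => f t x y * g t x y))
        (fun t x y => partial I d f t x y * g t x y + f t x y * partial I d g t x y).
Proof.
  intros HI Hf Hg t x y It. apply partial_val; auto.
  replace (section d (fun t x y => f t x y * g t x y) t x y) with
    (fun s => section d f t x y s * section d g t x y s) by (destruct d; reflexivity).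
  rewrite <- (section_coord d g t x y). rewrite <- (section_coord d f t x y).
  apply hd_mult; apply partial_spec; auto.
Qed.

Lemma partial_const I d k : is_interval I ->
  eqD I (partial I d (fun _ _ _ => k)) (fun _ _ _ => 0).
Proof.
  intros HI t x y It. apply partial_val; auto.
  replace (section d (fun _ _ _ => k) t x y) with (fun _ : R => k) by (destruct d; reflexivity).
  apply hd_const.
Qed.

Lemma cont_cong I f g : eqD I f g -> continuous_on_dom I f -> continuous_on_dom I g.
Proof.
  intros E H t x y It eps He. destruct (H t x y It eps He) as [d [Hd Hs]].
  exists d. split; auto. intros. rewrite <- !E; auto.
Qed.

Lemma cont_const I k : continuous_on_dom I (fun _ _ _ => k).
Proof. intros t x y It eps He. exists 1. split. lra. intros. rewrite Rminus_diag, Rabs_R0. lra. Qed.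

Lemma cont_plus I f g : continuous_on_dom I f -> continuous_on_dom I g ->
  continuous_on_dom I (fun t x y => f t x y + g t x y).
Proof.
  intros Hf Hg t x y It eps He.
  destruct (Hf t x y It (eps/2)) as [d1 [Hd1 Hs1]]; [lra|].
  destruct (Hg t x y It (eps/2)) as [d2 [Hd2 Hs2]]; [lra|].
  exists (Rmin d1 d2). split; [apply Rmin_pos; auto|].
  intros t' x' y' It' H1 H2 H3.
  assert (Hm1 := Rmin_l d1 d2). assert (Hm2 := Rmin_r d1 d2).
  specialize (Hs1 t' x' y' It' ltac:(lra) ltac:(lra) ltac:(lra)).
  specialize (Hs2 t' x' y' It' ltac:(lra) ltac:(lra) ltac:(lra)).
  replace (f t' x' y' + g t' x' y' - (f t x y + g t x y)) with
    ((f t' x' y' - f t x y) + (g t' x' y' - g t x y)) by ring.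
  eapply Rle_lt_trans. apply Rabs_triang. lra.
Qed.

Lemma cont_mult I f g : continuous_on_dom I f -> continuous_on_dom I g ->
  continuous_on_dom I (fun t x y => f t x y * g t x y).
Proof.
  intros Hf Hg t x y It eps He.
  destruct (mult_near (f t x y) (g t x y) eps He) as [d [Hd Hm]].
  destruct (Hf t x y It d Hd) as [d1 [Hd1 Hs1]].
  destruct (Hg t x y It d Hd) as [d2 [Hd2 Hs2]].
  exists (Rmin d1 d2). split; [apply Rmin_pos; auto|].
  intros t' x' y' It' H1 H2 H3.
  assert (Hm1 := Rmin_l d1 d2). assert (Hm2 := Rmin_r d1 d2).
  apply Hm; [apply Hs1|apply Hs2]; auto; lra.
Qed.

Inductive Gen (I : R -> Prop) : (R -> R -> R -> R) -> Prop :=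
| G_base f : smooth_on I f -> Gen I f
| G_const k : Gen I (fun _ _ _ => k)
| G_plus f g : Gen I f -> Gen I g -> Gen I (fun t x y => f t x y + g t x y)
| G_mult f g : Gen I f -> Gen I g -> Gen I (fun t x y => f t x y * g t x y)
| G_eq f g : Gen I f -> eqD I f g -> Gen I g.

Lemma smooth_partial I d f : smooth_on I f -> smooth_on I (partial I d f).
Proof.
  intros H w. specialize (H (w ++ d :: nil)). unfold iter_partial in *.
  rewrite fold_right_app in H. exact H.
Qed.

Lemma Gen_props I f : is_interval I -> Gen I f ->
  continuous_on_dom I f /\ (forall d, Dif I d f) /\ (forall d, Gen I (partial I d f)).
Proof.
  intros HI G. induction G as [f Hs|k|f g Gf [Cf [Df Pf]] Gg [Cg [Dg Pg]]
                              |f g Gf [Cf [Df Pf]] Gg [Cg [Dg Pg]]|f g Gf [Cf [Df Pf]] E].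
  - split; [exact (proj1 (Hs nil))|]. split.
    + intros d t x y It. exact (proj2 (Hs nil) d t x y It).
    + intros d. apply G_base. apply smooth_partial; auto.
  - split; [apply cont_const|]. split; [intros; apply Dif_const|].
    intros d. eapply G_eq; [apply (G_const I 0)|]. apply eqD_sym, partial_const; auto.
  - split; [apply cont_plus; auto|]. split; [intros; apply Dif_plus; auto|].
    intros d. eapply G_eq; [apply G_plus; [apply Pf|apply Pg]|].
    apply eqD_sym, partial_plus; auto.
  - split; [apply cont_mult; auto|]. split; [intros; apply Dif_mult; auto|].
    intros d. eapply G_eq; [apply G_plus; [apply G_mult; [apply Pf|exact Gg]|apply G_mult; [exact Gf|apply Pg]]|].
    apply eqD_sym, partial_mult; auto.
  - split; [eapply cont_cong; eauto|]. split; [intros; eapply Dif_cong; eauto|].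
    intros d. eapply G_eq; [apply Pf|]. apply partial_cong; auto.
Qed.

Lemma Gen_smooth I f : is_interval I -> Gen I f -> smooth_on I f.
Proof.
  intros HI G w.
  assert (Gw : Gen I (iter_partial I w f)).
  { induction w as [|d w IH]; simpl; auto. apply (Gen_props I _ HI IH). }
  destruct (Gen_props I _ HI Gw) as [C [D _]]. split; auto.
Qed.

Lemma ball_R (u e z : R) : ball u e z -> Rabs (z - u) < e.
Proof. intro H; exact H. Qed.

Lemma R_ball (u e z : R) : Rabs (z - u) < e -> ball u e z.
Proof. intro H; exact H. Qed.

Lemma tri_half (z u u0 e : R) : Rabs (z - u) < e / 2 -> Rabs (u - u0) < e / 2 -> Rabs (z - u0) < e.
Proof.
  intros H1 H2. replace (z - u0) with ((z - u) + (u - u0)) by ring.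
  eapply Rle_lt_trans. apply Rabs_triang. lra.
Qed.

Lemma cont2d_ext f g u0 v0 : locally_2d (fun u v => f u v = g u v) u0 v0 ->
  continuity_2d_pt f u0 v0 -> continuity_2d_pt g u0 v0.
Proof.
  intros [d Hd] Hc eps. destruct (Hc eps) as [d' H'].
  assert (Hp : 0 < Rmin d d') by (apply Rmin_pos; apply cond_pos).
  exists (mkposreal _ Hp). simpl. intros u v Hu Hv.
  assert (Hm1 := Rmin_l d d'). assert (Hm2 := Rmin_r d d').
  rewrite <- !Hd; try (rewrite Rminus_diag, Rabs_R0; apply cond_pos); try lra.
  apply H'; lra.
Qed.

Lemma schwarz2 (F P1 P2 P12 P21 : R -> R -> R) u0 v0 :
  locally_2d (fun u v => is_derive (fun z => F z v) u (P1 u v) /\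
                         is_derive (fun z => F u z) v (P2 u v) /\
                         is_derive (fun z => P2 z v) u (P21 u v) /\
                         is_derive (fun z => P1 u z) v (P12 u v)) u0 v0 ->
  continuity_2d_pt P21 u0 v0 -> continuity_2d_pt P12 u0 v0 -> P21 u0 v0 = P12 u0 v0.
Proof.
  intros [d Hd] C21 C12.
  assert (Hd2 : 0 < d / 2) by (pose proof (cond_pos d); lra).
  set (d2 := mkposreal _ Hd2).
  assert (E2 : forall u v, Rabs (u - u0) < d2 -> Rabs (v - v0) < d2 ->
     locally u (fun z => Derive (fun t => F z t) v = P2 z v)).
  { intros u v Hu Hv. exists d2. intros z Hz. apply ball_R in Hz. simpl in *.
    apply is_derive_unique. apply (Hd z v). eapply tri_half; eauto. lra. }
  assert (E1 : forall u v, Rabs (u - u0) < d2 -> Rabs (v - v0) < d2 ->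
     locally v (fun z => Derive (fun t => F t z) u = P1 u z)).
  { intros u v Hu Hv. exists d2. intros z Hz. apply ball_R in Hz. simpl in *.
    apply is_derive_unique. apply (Hd u z). lra. eapply tri_half; eauto. }
  assert (V21 : forall u v, Rabs (u - u0) < d2 -> Rabs (v - v0) < d2 ->
     Derive (fun z => Derive (fun t => F z t) v) u = P21 u v).
  { intros u v Hu Hv. transitivity (Derive (fun z => P2 z v) u).
    { apply Derive_ext_loc. exact (E2 u v Hu Hv). }
    apply is_derive_unique. apply (Hd u v); simpl in *; lra. }
  assert (V12 : forall u v, Rabs (u - u0) < d2 -> Rabs (v - v0) < d2 ->
     Derive (fun z => Derive (fun t => F t z) u) v = P12 u v).
  { intros u v Hu Hv. transitivity (Derive (fun z => P1 u z) v).
    { apply Derive_ext_loc. exact (E1 u v Hu Hv). }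
    apply is_derive_unique. apply (Hd u v); simpl in *; lra. }
  assert (Z : Rabs (u0 - u0) < d2) by (rewrite Rminus_diag, Rabs_R0; apply cond_pos).
  assert (Zv : Rabs (v0 - v0) < d2) by (rewrite Rminus_diag, Rabs_R0; apply cond_pos).
  rewrite <- (V21 u0 v0 Z Zv), <- (V12 u0 v0 Z Zv).
  apply Schwarz.
  - exists d2. intros u v Hu Hv. simpl in *.
    destruct (Hd u v ltac:(lra) ltac:(lra)) as [A1 [A2 [A3 A4]]].
    split; [eexists; exact A1|]. split; [eexists; exact A2|]. split.
    + apply (ex_derive_ext_loc (fun z => P2 z v)).
      * destruct (E2 u v Hu Hv) as [e He]. exists e. intros z Hz. symmetry. apply He; auto.
      * eexists; exact A3.
    + apply (ex_derive_ext_loc (fun z => P1 u z)).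
      * destruct (E1 u v Hu Hv) as [e He]. exists e. intros z Hz. symmetry. apply He; auto.
      * eexists; exact A4.
  - apply (cont2d_ext P21); auto. exists d2. intros u v Hu Hv. symmetry. apply V21; auto.
  - apply (cont2d_ext P12); auto. exists d2. intros u v Hu Hv. symmetry. apply V12; auto.
Qed.

Lemma pd_is_derive I d f t x y : is_interval I -> Dif I d f -> interior I t ->
  is_derive (section d f t x y) (coord d t x y) (partial I d f t x y).
Proof.
  intros HI Hd Ht.
  assert (It : I t). { destruct Ht as [r [Hr H]]. apply H. rewrite Rminus_diag, Rabs_R0; auto. }
  pose proof (partial_spec I d f t x y HI Hd It) as H.
  destruct d; simpl in H.
  - eapply interior_deriv; eauto.
  - apply full_deriv; auto.
  - apply full_deriv; auto.
Qed.

Lemma interior_near I t0 r : 0 < r -> (forall z, Rabs (z - t0) < r -> I z) ->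
  forall u, Rabs (u - t0) < r / 2 -> interior I u.
Proof.
  intros Hr H u Hu. exists (r/2). split. lra. intros z Hz. apply H.
  replace (z - t0) with ((z - u) + (u - t0)) by ring.
  eapply Rle_lt_trans. apply Rabs_triang. lra.
Qed.

Lemma smooth_Dif I f w d : smooth_on I f -> Dif I d (iter_partial I w f).
Proof. intros H t x y It. apply (proj2 (H w)); auto. Qed.

Lemma smooth_cont I f w : smooth_on I f -> continuous_on_dom I (iter_partial I w f).
Proof. intros H. apply (proj1 (H w)). Qed.

Lemma interior_I I t : interior I t -> I t.
Proof. intros [r [Hr H]]. apply H. rewrite Rminus_diag, Rabs_R0; auto. Qed.

Ltac pdd I f HI Hs d w t x y := exact (pd_is_derive I d (iter_partial I w f) t x y HI (smooth_Dif I f w d Hs) ltac:(assumption)).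

Lemma schwarz_t1 I f t0 x0 y0 : is_interval I -> smooth_on I f -> interior I t0 ->
  partial I Dt (partial I D1 f) t0 x0 y0 = partial I D1 (partial I Dt f) t0 x0 y0.
Proof.
  intros HI Hs [r [Hr Hin]].
  apply (schwarz2 (fun u v => f u v y0) (fun u v => partial I Dt f u v y0)
     (fun u v => partial I D1 f u v y0)
     (fun u v => partial I D1 (partial I Dt f) u v y0)
     (fun u v => partial I Dt (partial I D1 f) u v y0)).
  - assert (Hr2 : 0 < r / 2) by lra. exists (mkposreal _ Hr2). simpl. intros u v Hu Hv.
    assert (Iu := interior_near I t0 r Hr Hin u Hu).
    split; [pdd I f HI Hs Dt (@nil dir) u v y0|]. split; [pdd I f HI Hs D1 (@nil dir) u v y0|].
    split; [pdd I f HI Hs Dt (D1 :: nil) u v y0|pdd I f HI Hs D1 (Dt :: nil) u v y0].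
  - intros eps. destruct (smooth_cont I f (Dt :: D1 :: nil) Hs t0 x0 y0 (Hin t0 ltac:(rewrite Rminus_diag, Rabs_R0; auto)) eps (cond_pos eps)) as [d [Hd Hc]].
    assert (Hp : 0 < Rmin d r) by (apply Rmin_pos; auto).
    exists (mkposreal _ Hp). simpl. intros u v Hu Hv.
    assert (Hm1 := Rmin_l d r). assert (Hm2 := Rmin_r d r).
    apply Hc; try lra. apply Hin; lra. rewrite Rminus_diag, Rabs_R0; auto.
  - intros eps. destruct (smooth_cont I f (D1 :: Dt :: nil) Hs t0 x0 y0 (Hin t0 ltac:(rewrite Rminus_diag, Rabs_R0; auto)) eps (cond_pos eps)) as [d [Hd Hc]].
    assert (Hp : 0 < Rmin d r) by (apply Rmin_pos; auto).
    exists (mkposreal _ Hp). simpl. intros u v Hu Hv.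
    assert (Hm1 := Rmin_l d r). assert (Hm2 := Rmin_r d r).
    apply Hc; try lra. apply Hin; lra. rewrite Rminus_diag, Rabs_R0; auto.
Qed.

Lemma schwarz_t2 I f t0 x0 y0 : is_interval I -> smooth_on I f -> interior I t0 ->
  partial I Dt (partial I D2 f) t0 x0 y0 = partial I D2 (partial I Dt f) t0 x0 y0.
Proof.
  intros HI Hs [r [Hr Hin]].
  apply (schwarz2 (fun u v => f u x0 v) (fun u v => partial I Dt f u x0 v)
     (fun u v => partial I D2 f u x0 v)
     (fun u v => partial I D2 (partial I Dt f) u x0 v)
     (fun u v => partial I Dt (partial I D2 f) u x0 v)).
  - assert (Hr2 : 0 < r / 2) by lra. exists (mkposreal _ Hr2). simpl. intros u v Hu Hv.
    assert (Iu := interior_near I t0 r Hr Hin u Hu).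
    split; [pdd I f HI Hs Dt (@nil dir) u x0 v|]. split; [pdd I f HI Hs D2 (@nil dir) u x0 v|].
    split; [pdd I f HI Hs Dt (D2 :: nil) u x0 v|pdd I f HI Hs D2 (Dt :: nil) u x0 v].
  - intros eps. destruct (smooth_cont I f (Dt :: D2 :: nil) Hs t0 x0 y0 (Hin t0 ltac:(rewrite Rminus_diag, Rabs_R0; auto)) eps (cond_pos eps)) as [d [Hd Hc]].
    assert (Hp : 0 < Rmin d r) by (apply Rmin_pos; auto).
    exists (mkposreal _ Hp). simpl. intros u v Hu Hv.
    assert (Hm1 := Rmin_l d r). assert (Hm2 := Rmin_r d r).
    apply Hc; try lra. apply Hin; lra. rewrite Rminus_diag, Rabs_R0; auto.
  - intros eps. destruct (smooth_cont I f (D2 :: Dt :: nil) Hs t0 x0 y0 (Hin t0 ltac:(rewrite Rminus_diag, Rabs_R0; auto)) eps (cond_pos eps)) as [d [Hd Hc]].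
    assert (Hp : 0 < Rmin d r) by (apply Rmin_pos; auto).
    exists (mkposreal _ Hp). simpl. intros u v Hu Hv.
    assert (Hm1 := Rmin_l d r). assert (Hm2 := Rmin_r d r).
    apply Hc; try lra. apply Hin; lra. rewrite Rminus_diag, Rabs_R0; auto.
Qed.

Lemma schwarz_12 I f t0 x0 y0 : is_interval I -> smooth_on I f -> interior I t0 ->
  partial I D1 (partial I D2 f) t0 x0 y0 = partial I D2 (partial I D1 f) t0 x0 y0.
Proof.
  intros HI Hs Ht.
  assert (It := interior_I I t0 Ht).
  apply (schwarz2 (fun u v => f t0 u v) (fun u v => partial I D1 f t0 u v)
     (fun u v => partial I D2 f t0 u v)
     (fun u v => partial I D2 (partial I D1 f) t0 u v)
     (fun u v => partial I D1 (partial I D2 f) t0 u v)).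
  - exists (mkposreal 1 Rlt_0_1). simpl. intros u v Hu Hv.
    split; [pdd I f HI Hs D1 (@nil dir) t0 u v|]. split; [pdd I f HI Hs D2 (@nil dir) t0 u v|].
    split; [pdd I f HI Hs D1 (D2 :: nil) t0 u v|pdd I f HI Hs D2 (D1 :: nil) t0 u v].
  - intros eps. destruct (smooth_cont I f (D1 :: D2 :: nil) Hs t0 x0 y0 It eps (cond_pos eps)) as [d [Hd Hc]].
    exists (mkposreal _ Hd). simpl. intros u v Hu Hv.
    apply Hc; auto. rewrite Rminus_diag, Rabs_R0; auto.
  - intros eps. destruct (smooth_cont I f (D2 :: D1 :: nil) Hs t0 x0 y0 It eps (cond_pos eps)) as [d [Hd Hc]].
    exists (mkposreal _ Hd). simpl. intros u v Hu Hv.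
    apply Hc; auto. rewrite Rminus_diag, Rabs_R0; auto.
Qed.

Lemma ext_by_cont I g1 g2 t0 x0 y0 : is_interval I -> I t0 ->
  continuous_on_dom I g1 -> continuous_on_dom I g2 ->
  (forall t x y, interior I t -> g1 t x y = g2 t x y) -> g1 t0 x0 y0 = g2 t0 x0 y0.
Proof.
  intros HI It C1 C2 E.
  apply Rminus_diag_uniq. apply small_zero. intros eps He.
  destruct (C1 t0 x0 y0 It (eps/2)) as [d1 [Hd1 H1]]; [lra|].
  destruct (C2 t0 x0 y0 It (eps/2)) as [d2 [Hd2 H2]]; [lra|].
  destruct (approx_int I t0 (Rmin d1 d2) HI It) as [s [Hs Hsd]]; [apply Rmin_pos; auto|].
  assert (Hm1 := Rmin_l d1 d2). assert (Hm2 := Rmin_r d1 d2).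
  assert (Is := interior_I I s Hs).
  assert (Z : Rabs (x0 - x0) < d1 /\ Rabs (y0 - y0) < d1 /\ Rabs (x0 - x0) < d2 /\ Rabs (y0 - y0) < d2)
    by (rewrite !Rminus_diag, !Rabs_R0; auto).
  specialize (H1 s x0 y0 Is ltac:(lra) ltac:(tauto) ltac:(tauto)).
  specialize (H2 s x0 y0 Is ltac:(lra) ltac:(tauto) ltac:(tauto)).
  rewrite (E s x0 y0 Hs) in H1.
  replace (g1 t0 x0 y0 - g2 t0 x0 y0) with (-(g2 s x0 y0 - g1 t0 x0 y0) + (g2 s x0 y0 - g2 t0 x0 y0)) by ring.
  eapply Rle_lt_trans. apply Rabs_triang. rewrite Rabs_Ropp. lra.
Qed.

Lemma schwarz I a b f : is_interval I -> smooth_on I f ->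
  eqD I (partial I a (partial I b f)) (partial I b (partial I a f)).
Proof.
  intros HI Hs t x y It.
  apply (ext_by_cont I); auto.
  - exact (smooth_cont I f (a :: b :: nil) Hs).
  - exact (smooth_cont I f (b :: a :: nil) Hs).
  - intros t' x' y' Ht'.
    destruct a, b; try reflexivity;
      first [ apply schwarz_t1 | apply schwarz_t2 | apply schwarz_12
            | symmetry; apply schwarz_t1 | symmetry; apply schwarz_t2 | symmetry; apply schwarz_12 ];
      auto.
Qed.

Lemma hd_opp D f c l : has_deriv_within D f c l -> has_deriv_within D (fun s => - f s) c (- l).
Proof.
  intros H. apply hd_Lim. apply hd_Lim in H.
  eapply Lim_ext; [| |exact (Lim_mult _ _ _ _ _ _ (Lim_const D c (-1)) H)].
  - intros s _ Hs. cbv beta. field. intro E; apply Hs; lra.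
  - ring.
Qed.

Lemma partial_minus I d f g : is_interval I -> Dif I d f -> Dif I d g ->
  eqD I (partial I d (fun t x y => f t x y - g t x y))
        (fun t x y => partial I d f t x y - partial I d g t x y).
Proof.
  intros HI Hf Hg t x y It. apply partial_val; auto.
  replace (section d (fun t x y => f t x y - g t x y) t x y) with
    (fun s => section d f t x y s + - section d g t x y s) by (destruct d; reflexivity).
  apply hd_plus; [|apply hd_opp]; apply partial_spec; auto.
Qed.

Lemma Gen_minus I f g : Gen I f -> Gen I g -> Gen I (fun t x y => f t x y - g t x y).
Proof.
  intros Hf Hg. eapply G_eq; [apply G_plus; [exact Hf|apply G_mult; [apply (G_const I (-1))|exact Hg]]|].
  intros t x y It. ring.
Qed.

Open Scope C_scope.

Definition re3 (p : R -> R -> R -> C) : R -> R -> R -> R := fun t x y => fst (p t x y).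
Definition im3 (p : R -> R -> R -> C) : R -> R -> R -> R := fun t x y => snd (p t x y).
Definition SC I (p : R -> R -> R -> C) := Gen I (re3 p) /\ Gen I (im3 p).
Definition eqDC (I : R -> Prop) (p q : R -> R -> R -> C) := forall t x y, I t -> p t x y = q t x y.

Lemma Gen_Dif I f d : is_interval I -> Gen I f -> Dif I d f.
Proof. intros HI G. apply (Gen_props I f HI G). Qed.

Lemma Gen_partial I f d : is_interval I -> Gen I f -> Gen I (partial I d f).
Proof. intros HI G. apply (Gen_props I f HI G). Qed.

Lemma SC_plus I p q : SC I p -> SC I q -> SC I (fun t x y => p t x y + q t x y).
Proof. intros [Hp1 Hp2] [Hq1 Hq2]. split; apply G_plus; auto. Qed.

Lemma SC_mult I p q : SC I p -> SC I q -> SC I (fun t x y => p t x y * q t x y).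
Proof. intros [Hp1 Hp2] [Hq1 Hq2]. split.
  - exact (Gen_minus I _ _ (G_mult I _ _ Hp1 Hq1) (G_mult I _ _ Hp2 Hq2)).
  - exact (G_plus I _ _ (G_mult I _ _ Hp1 Hq2) (G_mult I _ _ Hp2 Hq1)).
Qed.

Lemma SC_const I (c : C) : SC I (fun _ _ _ => c).
Proof. split; [exact (G_const I (fst c))|exact (G_const I (snd c))]. Qed.

Lemma SC_RtoC I f : Gen I f -> SC I (fun t x y => RtoC (f t x y)).
Proof. intros H. split; [exact H|exact (G_const I 0)]. Qed.

Lemma SC_cpartial I d p : is_interval I -> SC I p -> SC I (cpartial I d p).
Proof. intros HI [H1 H2]. split; apply Gen_partial; auto. Qed.

Lemma SC_conj I p : SC I p -> SC I (fun t x y => Cconj (p t x y)).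
Proof. intros [H1 H2]. split; [exact H1|].
  eapply G_eq; [apply G_mult; [apply (G_const I (-1))|exact H2]|]. intros t x y It.
  unfold im3. simpl. ring.
Qed.

Lemma SC_cong I p q : SC I p -> eqDC I p q -> SC I q.
Proof. intros [H1 H2] E. split; [eapply G_eq; [exact H1|]|eapply G_eq; [exact H2|]];
  intros t x y It; unfold re3, im3; rewrite E; auto. Qed.

Lemma cpartial_cong I d p q : is_interval I -> eqDC I p q -> eqDC I (cpartial I d p) (cpartial I d q).
Proof.
  intros HI E t x y It. unfold cpartial.
  f_equal.
  - apply (partial_cong I d (re3 p) (re3 q) HI); auto. intros ? ? ? ?; unfold re3; rewrite E; auto.
  - apply (partial_cong I d (im3 p) (im3 q) HI); auto. intros ? ? ? ?; unfold im3; rewrite E; auto.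
Qed.

Lemma cpartial_plus I d p q : is_interval I -> SC I p -> SC I q ->
  eqDC I (cpartial I d (fun t x y => p t x y + q t x y))
         (fun t x y => cpartial I d p t x y + cpartial I d q t x y).
Proof.
  intros HI [Hp1 Hp2] [Hq1 Hq2] t x y It. unfold cpartial.
  apply injective_projections; simpl.
  - exact (partial_plus I d (re3 p) (re3 q) HI (Gen_Dif I _ d HI Hp1) (Gen_Dif I _ d HI Hq1) t x y It).
  - exact (partial_plus I d (im3 p) (im3 q) HI (Gen_Dif I _ d HI Hp2) (Gen_Dif I _ d HI Hq2) t x y It).
Qed.

Lemma cpartial_mult I d p q : is_interval I -> SC I p -> SC I q ->
  eqDC I (cpartial I d (fun t x y => p t x y * q t x y))
         (fun t x y => cpartial I d p t x y * q t x y + p t x y * cpartial I d q t x y).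
Proof.
  intros HI [Hp1 Hp2] [Hq1 Hq2] t x y It.
  assert (Dp1 := Gen_Dif I _ d HI Hp1). assert (Dp2 := Gen_Dif I _ d HI Hp2).
  assert (Dq1 := Gen_Dif I _ d HI Hq1). assert (Dq2 := Gen_Dif I _ d HI Hq2).
  assert (M11 := partial_mult I d (re3 p) (re3 q) HI Dp1 Dq1 t x y It).
  assert (M22 := partial_mult I d (im3 p) (im3 q) HI Dp2 Dq2 t x y It).
  assert (M12 := partial_mult I d (re3 p) (im3 q) HI Dp1 Dq2 t x y It).
  assert (M21 := partial_mult I d (im3 p) (re3 q) HI Dp2 Dq1 t x y It).
  assert (E1 := partial_minus I d (fun t x y => (re3 p t x y * re3 q t x y)%R)
                 (fun t x y => (im3 p t x y * im3 q t x y)%R) HI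
                 (Dif_mult I d _ _ Dp1 Dq1) (Dif_mult I d _ _ Dp2 Dq2) t x y It).
  assert (E2 := partial_plus I d (fun t x y => (re3 p t x y * im3 q t x y)%R)
                 (fun t x y => (im3 p t x y * re3 q t x y)%R) HI
                 (Dif_mult I d _ _ Dp1 Dq2) (Dif_mult I d _ _ Dp2 Dq1) t x y It).
  cbv beta in E1, E2. rewrite M11, M22 in E1. rewrite M12, M21 in E2.
  unfold cpartial. apply injective_projections.
  - transitivity (fst (partial I d (fun t x y => (re3 p t x y * re3 q t x y - im3 p t x y * im3 q t x y)%R) t x y,
                       partial I d (fun t x y => (re3 p t x y * im3 q t x y + im3 p t x y * re3 q t x y)%R) t x y)).
    reflexivity. simpl fst at 1. rewrite E1. unfold re3, im3. simpl. ring.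
  - transitivity (snd (partial I d (fun t x y => (re3 p t x y * re3 q t x y - im3 p t x y * im3 q t x y)%R) t x y,
                       partial I d (fun t x y => (re3 p t x y * im3 q t x y + im3 p t x y * re3 q t x y)%R) t x y)).
    reflexivity. simpl snd at 1. rewrite E2. unfold re3, im3. simpl. ring.
Qed.

Lemma cpartial_const I d (c : C) : is_interval I ->
  eqDC I (cpartial I d (fun _ _ _ => c)) (fun _ _ _ => 0).
Proof.
  intros HI t x y It. unfold cpartial. apply injective_projections; simpl.
  - exact (partial_const I d (fst c) HI t x y It).
  - exact (partial_const I d (snd c) HI t x y It).
Qed.

Lemma cpartial_RtoC I d f : is_interval I ->
  eqDC I (cpartial I d (fun t x y => RtoC (f t x y))) (fun t x y => RtoC (partial I d f t x y)).
Proof.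
  intros HI t x y It. unfold cpartial. apply injective_projections; simpl.
  - reflexivity.
  - exact (partial_const I d 0 HI t x y It).
Qed.

Lemma cpartial_schwarz I a b p : is_interval I -> SC I p ->
  eqDC I (cpartial I a (cpartial I b p)) (cpartial I b (cpartial I a p)).
Proof.
  intros HI [H1 H2] t x y It. unfold cpartial at 1 3. apply injective_projections; simpl.
  - exact (schwarz I a b (re3 p) HI (Gen_smooth I _ HI H1) t x y It).
  - exact (schwarz I a b (im3 p) HI (Gen_smooth I _ HI H2) t x y It).
Qed.

Definition HypA I (At A1 A2 : R -> R -> R -> R) := smooth_on I At /\ smooth_on I A1 /\ smooth_on I A2.

Lemma GA I At A1 A2 d : HypA I At A1 A2 -> Gen I (Acomp At A1 A2 d).
Proof. intros [H1 [H2 H3]]. destruct d; apply G_base; auto. Qed.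

Lemma SC_covD I At A1 A2 d p : is_interval I -> HypA I At A1 A2 -> SC I p -> SC I (covD I At A1 A2 d p).
Proof.
  intros HI HA Hp. unfold covD.
  apply SC_plus. apply SC_cpartial; auto.
  apply SC_mult; auto. apply SC_mult. apply SC_const. apply SC_RtoC. apply GA; auto.
Qed.

Lemma covD_cong I At A1 A2 d p q : is_interval I -> eqDC I p q ->
  eqDC I (covD I At A1 A2 d p) (covD I At A1 A2 d q).
Proof.
  intros HI E t x y It. unfold covD. rewrite (cpartial_cong I d p q HI E t x y It), E; auto.
Qed.

Lemma covD_plus I At A1 A2 d p q : is_interval I -> SC I p -> SC I q ->
  eqDC I (covD I At A1 A2 d (fun t x y => p t x y + q t x y))
         (fun t x y => covD I At A1 A2 d p t x y + covD I At A1 A2 d q t x y).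
Proof.
  intros HI Hp Hq t x y It. unfold covD.
  rewrite (cpartial_plus I d p q HI Hp Hq t x y It). ring.
Qed.

Lemma covD_scal I At A1 A2 d (c : C) p : is_interval I -> SC I p ->
  eqDC I (covD I At A1 A2 d (fun t x y => c * p t x y))
         (fun t x y => c * covD I At A1 A2 d p t x y).
Proof.
  intros HI Hp t x y It. unfold covD.
  rewrite (cpartial_mult I d (fun _ _ _ => c) p HI (SC_const I c) Hp t x y It).
  rewrite (cpartial_const I d c HI t x y It). ring.
Qed.

Lemma covD_zero I At A1 A2 d p : is_interval I -> eqDC I p (fun _ _ _ => 0) ->
  eqDC I (covD I At A1 A2 d p) (fun _ _ _ => 0).
Proof.
  intros HI E t x y It. rewrite (covD_cong I At A1 A2 d p (fun _ _ _ => 0) HI E t x y It).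
  unfold covD. rewrite (cpartial_const I d 0 HI t x y It). ring.
Qed.

Lemma covD_covD I At A1 A2 a b p t x y : is_interval I -> HypA I At A1 A2 -> SC I p -> I t ->
  covD I At A1 A2 a (covD I At A1 A2 b p) t x y =
  cpartial I a (cpartial I b p) t x y
  + Ci * RtoC (partial I a (Acomp At A1 A2 b) t x y) * p t x y
  + Ci * RtoC (Acomp At A1 A2 b t x y) * cpartial I a p t x y
  + Ci * RtoC (Acomp At A1 A2 a t x y) *
      (cpartial I b p t x y + Ci * RtoC (Acomp At A1 A2 b t x y) * p t x y).
Proof.
  intros HI HA Hp It.
  assert (SAb : SC I (fun t x y => Ci * RtoC (Acomp At A1 A2 b t x y))).
  { apply SC_mult. apply SC_const. apply SC_RtoC. apply GA; auto. }
  unfold covD at 1. unfold covD at 1.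
  rewrite (cpartial_plus I a (cpartial I b p) (fun t x y => Ci * RtoC (Acomp At A1 A2 b t x y) * p t x y)
             HI (SC_cpartial I b p HI Hp) (SC_mult I _ _ SAb Hp) t x y It).
  rewrite (cpartial_mult I a (fun t x y => Ci * RtoC (Acomp At A1 A2 b t x y)) p HI SAb Hp t x y It).
  rewrite (cpartial_mult I a (fun _ _ _ => Ci) (fun t x y => RtoC (Acomp At A1 A2 b t x y)) HI
             (SC_const I Ci) (SC_RtoC I _ (GA I At A1 A2 b HA)) t x y It).
  rewrite (cpartial_const I a Ci HI t x y It).
  rewrite (cpartial_RtoC I a (Acomp At A1 A2 b) HI t x y It).
  unfold covD. ring.
Qed.

Lemma commutator I At A1 A2 a b p : is_interval I -> HypA I At A1 A2 -> SC I p ->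
  eqDC I (covD I At A1 A2 a (covD I At A1 A2 b p))
         (fun t x y => covD I At A1 A2 b (covD I At A1 A2 a p) t x y
                       + Ci * RtoC (curv I At A1 A2 a b t x y) * p t x y).
Proof.
  intros HI HA Hp t x y It.
  rewrite (covD_covD I At A1 A2 a b p t x y HI HA Hp It).
  rewrite (covD_covD I At A1 A2 b a p t x y HI HA Hp It).
  rewrite (cpartial_schwarz I a b p HI Hp t x y It).
  unfold curv. rewrite RtoC_minus. ring.
Qed.

Ltac cfield :=
  repeat match goal with
  | v : C |- _ => let a := fresh "r" in let b := fresh "r" in destruct v as [a b]
  end;
  unfold Cconj, Cminus, Copp, Cplus, Cmult, Cinv, RtoC, Ci; simpl;
  apply injective_projections; simpl; field; try lra.
Lemma alg1 (X1 X2 a11 a12 a21 a22 u1 u2 tpsi zz e1 e2 k1 k2 w1 w2 s p : C) (Ft1 Ft2 F12 F1t F2t F21 : R) :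
  tpsi = / RtoC 2 * X1 + - (/ (RtoC 2 * Ci)) * X2 ->
  zz = / RtoC 2 * u1 + / (RtoC 2 * Ci) * u2 ->
  u1 = / RtoC 2 * a11 + - (/ (RtoC 2 * Ci)) * a12 ->
  u2 = / RtoC 2 * a21 + - (/ (RtoC 2 * Ci)) * a22 ->
  a21 = a12 + Ci * RtoC F21 * s ->
  e1 = RtoC 0 -> e1 = Ci * k1 + RtoC 4 * w1 ->
  k1 = X1 + Ci * RtoC F1t * p ->
  w1 = / RtoC 2 * a11 + / (RtoC 2 * Ci) * a12 ->
  e2 = RtoC 0 -> e2 = Ci * k2 + RtoC 4 * w2 ->
  k2 = X2 + Ci * RtoC F2t * p ->
  w2 = / RtoC 2 * a21 + / (RtoC 2 * Ci) * a22 ->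
  F1t = (- Ft1)%R -> F2t = (- Ft2)%R -> F21 = (- F12)%R ->
  / RtoC 2 * RtoC Ft1 - / (RtoC 2 * Ci) * RtoC Ft2 = Cconj p * s ->
  - (/ (RtoC 2 * Ci) * RtoC F12) = / (RtoC 4 * Ci) * RtoC (Cmod p ^ 2) ->
  Ci * tpsi + RtoC 4 * zz = RtoC 0.
Proof.
  intros htpsi hzz hu1 hu2 ha21 hE1 hE1' hk1 hw1 hE2 hE2' hk2 hw2 f1 f2 f3 H1 H2.
  rewrite Cmod2_conj in H2.
  assert (K : Ci * tpsi + RtoC 4 * zz = / RtoC 2 * e1 - / (RtoC 2 * Ci) * e2
     - (/ RtoC 2 * RtoC Ft1 - / (RtoC 2 * Ci) * RtoC Ft2 - Cconj p * s) * p
     + RtoC 4 * Ci * (- (/ (RtoC 2 * Ci) * RtoC F12) - / (RtoC 4 * Ci) * (p * Cconj p)) * s).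
  { rewrite hE1', hE2'. subst. clear. cfield. }
  rewrite K, hE1, hE2, H1, H2. ring.
Qed.

Lemma alg2 (Y1 Y2 b1 b2 tz zb e1 e2 k1 k2 s p : C) (Ft1 Ft2 F1t F2t : R) :
  tz = / RtoC 2 * Y1 + - (/ (RtoC 2 * Ci)) * Y2 ->
  zb = / RtoC 2 * b1 - / (RtoC 2 * Ci) * b2 ->
  e1 = RtoC 0 -> e1 = Ci * k1 + RtoC 4 * b1 ->
  k1 = Y1 + Ci * RtoC F1t * s ->
  e2 = RtoC 0 -> e2 = Ci * k2 + RtoC 4 * b2 ->
  k2 = Y2 + Ci * RtoC F2t * s ->
  F1t = (- Ft1)%R -> F2t = (- Ft2)%R ->
  / RtoC 2 * RtoC Ft1 - / (RtoC 2 * Ci) * RtoC Ft2 = Cconj p * s ->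
  Ci * tz + RtoC 4 * zb + Cconj p * (s * s) = RtoC 0.
Proof.
  intros htz hzb hE1 hE1' hk1 hE2 hE2' hk2 f1 f2 H1.
  assert (K : Ci * tz + RtoC 4 * zb + Cconj p * (s * s) = / RtoC 2 * e1 - / (RtoC 2 * Ci) * e2
     - (/ RtoC 2 * RtoC Ft1 - / (RtoC 2 * Ci) * RtoC Ft2 - Cconj p * s) * s).
  { rewrite hE1', hE2'. subst. clear. cfield. }
  rewrite K, hE1, hE2, H1. ring.
Qed.

Lemma SC_lin I (c1 c2 : C) p q : SC I p -> SC I q ->
  SC I (fun t x y => c1 * p t x y + c2 * q t x y).
Proof. intros. apply SC_plus; apply SC_mult; auto; apply SC_const. Qed.

Lemma covDzb_lin I At A1 A2 p :
  eqDC I (covDzb I At A1 A2 p)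
    (fun t x y => / RtoC 2 * covD I At A1 A2 D1 p t x y + - (/ (RtoC 2 * Ci)) * covD I At A1 A2 D2 p t x y).
Proof. intros t x y It. unfold covDzb. ring. Qed.

Lemma SC_covDzb I At A1 A2 p : is_interval I -> HypA I At A1 A2 -> SC I p -> SC I (covDzb I At A1 A2 p).
Proof.
  intros HI HA Hp. eapply SC_cong; [|intros t x y It; symmetry; exact (covDzb_lin I At A1 A2 p t x y It)].
  apply SC_lin; apply SC_covD; auto.
Qed.

Lemma SC_covDz I At A1 A2 p : is_interval I -> HypA I At A1 A2 -> SC I p -> SC I (covDz I At A1 A2 p).
Proof. intros HI HA Hp. unfold covDz. apply SC_lin; apply SC_covD; auto. Qed.

Lemma L_lin I At A1 A2 d (c1 c2 : C) p q : is_interval I -> SC I p -> SC I q ->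
  eqDC I (covD I At A1 A2 d (fun t x y => c1 * p t x y + c2 * q t x y))
         (fun t x y => c1 * covD I At A1 A2 d p t x y + c2 * covD I At A1 A2 d q t x y).
Proof.
  intros HI Hp Hq t x y It.
  rewrite (covD_plus I At A1 A2 d (fun t x y => c1 * p t x y) (fun t x y => c2 * q t x y) HI
             (SC_mult I _ _ (SC_const I c1) Hp) (SC_mult I _ _ (SC_const I c2) Hq) t x y It).
  rewrite (covD_scal I At A1 A2 d c1 p HI Hp t x y It).
  rewrite (covD_scal I At A1 A2 d c2 q HI Hq t x y It).
  reflexivity.
Qed.

Lemma covD_Zb I At A1 A2 d p : is_interval I -> HypA I At A1 A2 -> SC I p ->
  eqDC I (covD I At A1 A2 d (covDzb I At A1 A2 p))
    (fun t x y => / RtoC 2 * covD I At A1 A2 d (covD I At A1 A2 D1 p) t x y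
                + - (/ (RtoC 2 * Ci)) * covD I At A1 A2 d (covD I At A1 A2 D2 p) t x y).
Proof.
  intros HI HA Hp t x y It.
  rewrite (covD_cong I At A1 A2 d _ _ HI (covDzb_lin I At A1 A2 p) t x y It).
  apply L_lin; auto; apply SC_covD; auto.
Qed.

Lemma curv_anti I At A1 A2 a b t x y : curv I At A1 A2 a b t x y = (- curv I At A1 A2 b a t x y)%R.
Proof. unfold curv. ring. Qed.

Lemma step1 I At A1 A2 phi : is_interval I -> HypA I At A1 A2 -> SC I phi ->
  (forall t x y, I t ->
     F_tzb I At A1 A2 t x y = Cconj (phi t x y) * covDzb I At A1 A2 phi t x y) ->
  (forall t x y, I t ->
     F_zzb I At A1 A2 t x y = / (RtoC 4 * Ci) * RtoC (Cmod (phi t x y) ^ 2)%R) ->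
  (forall t x y, I t ->
     Ci * covD I At A1 A2 Dt phi t x y
     + RtoC 4 * covDz I At A1 A2 (covDzb I At A1 A2 phi) t x y = RtoC 0) ->
  forall t x y, I t ->
     Ci * covD I At A1 A2 Dt (covDzb I At A1 A2 phi) t x y
     + RtoC 4 * covDz I At A1 A2 (covDzb I At A1 A2 (covDzb I At A1 A2 phi)) t x y
     = RtoC 0.
Proof.
  intros HI HA Sp H1 H2 H3 t x y It.
  pose (cD := covD I At A1 A2). pose (psi := covDzb I At A1 A2 phi).
  pose (E := fun t x y => Ci * cD Dt phi t x y + RtoC 4 * covDz I At A1 A2 psi t x y).
  assert (Spsi : SC I psi) by (apply SC_covDzb; auto).
  assert (HE : eqDC I E (fun _ _ _ => RtoC 0)) by (intros ? ? ? ?; apply H3; auto).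
  assert (S1 : SC I (cD Dt phi)) by (apply SC_covD; auto).
  assert (S2 : SC I (covDz I At A1 A2 psi)) by (apply SC_covDz; auto).
  assert (S3 : SC I (cD D1 psi)) by (apply SC_covD; auto).
  assert (S4 : SC I (cD D2 psi)) by (apply SC_covD; auto).
  specialize (H1 t x y It). specialize (H2 t x y It).
  unfold F_tzb in H1. unfold F_zzb in H2.
  apply (alg1 (cD Dt (cD D1 phi) t x y) (cD Dt (cD D2 phi) t x y)
              (cD D1 (cD D1 psi) t x y) (cD D1 (cD D2 psi) t x y)
              (cD D2 (cD D1 psi) t x y) (cD D2 (cD D2 psi) t x y)
              (cD D1 (covDzb I At A1 A2 psi) t x y) (cD D2 (covDzb I At A1 A2 psi) t x y)
              (cD Dt psi t x y) (covDz I At A1 A2 (covDzb I At A1 A2 psi) t x y)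
              (cD D1 E t x y) (cD D2 E t x y)
              (cD D1 (cD Dt phi) t x y) (cD D2 (cD Dt phi) t x y)
              (cD D1 (covDz I At A1 A2 psi) t x y) (cD D2 (covDz I At A1 A2 psi) t x y)
              (psi t x y) (phi t x y)
              (curv I At A1 A2 Dt D1 t x y) (curv I At A1 A2 Dt D2 t x y)
              (curv I At A1 A2 D1 D2 t x y) (curv I At A1 A2 D1 Dt t x y)
              (curv I At A1 A2 D2 Dt t x y) (curv I At A1 A2 D2 D1 t x y)).
  - exact (covD_Zb I At A1 A2 Dt phi HI HA Sp t x y It).
  - reflexivity.
  - exact (covD_Zb I At A1 A2 D1 psi HI HA Spsi t x y It).
  - exact (covD_Zb I At A1 A2 D2 psi HI HA Spsi t x y It).
  - exact (commutator I At A1 A2 D2 D1 psi HI HA Spsi t x y It).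
  - exact (covD_zero I At A1 A2 D1 E HI HE t x y It).
  - exact (L_lin I At A1 A2 D1 Ci (RtoC 4) _ _ HI S1 S2 t x y It).
  - exact (commutator I At A1 A2 D1 Dt phi HI HA Sp t x y It).
  - exact (L_lin I At A1 A2 D1 _ _ _ _ HI S3 S4 t x y It).
  - exact (covD_zero I At A1 A2 D2 E HI HE t x y It).
  - exact (L_lin I At A1 A2 D2 Ci (RtoC 4) _ _ HI S1 S2 t x y It).
  - exact (commutator I At A1 A2 D2 Dt phi HI HA Sp t x y It).
  - exact (L_lin I At A1 A2 D2 _ _ _ _ HI S3 S4 t x y It).
  - apply curv_anti.
  - apply curv_anti.
  - apply curv_anti.
  - exact H1.
  - exact H2.
Qed.

Lemma step2 I At A1 A2 phi : is_interval I -> HypA I At A1 A2 -> SC I phi ->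
  (forall t x y, I t ->
     F_tzb I At A1 A2 t x y = Cconj (phi t x y) * covDzb I At A1 A2 phi t x y) ->
  (forall t x y, I t ->
     Ci * covD I At A1 A2 Dt (covDzb I At A1 A2 phi) t x y
     + RtoC 4 * covDz I At A1 A2 (covDzb I At A1 A2 (covDzb I At A1 A2 phi)) t x y
     = RtoC 0) ->
  forall t x y, I t ->
     Ci * covD I At A1 A2 Dt (covDzb I At A1 A2 (covDzb I At A1 A2 phi)) t x y
     + RtoC 4 * covDzb I At A1 A2
         (covDz I At A1 A2 (covDzb I At A1 A2 (covDzb I At A1 A2 phi))) t x y
     + Cconj (phi t x y) * (covDzb I At A1 A2 phi t x y * covDzb I At A1 A2 phi t x y)
     = RtoC 0.
Proof.
  intros HI HA Sp H1 H3 t x y It.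
  pose (cD := covD I At A1 A2). pose (psi := covDzb I At A1 A2 phi).
  pose (V := covDz I At A1 A2 (covDzb I At A1 A2 psi)).
  pose (E := fun t x y => Ci * cD Dt psi t x y + RtoC 4 * V t x y).
  assert (Spsi : SC I psi) by (apply SC_covDzb; auto).
  assert (HE : eqDC I E (fun _ _ _ => RtoC 0)) by (intros ? ? ? ?; apply H3; auto).
  assert (S1 : SC I (cD Dt psi)) by (apply SC_covD; auto).
  assert (S2 : SC I V) by (apply SC_covDz; auto; apply SC_covDzb; auto).
  specialize (H1 t x y It). unfold F_tzb in H1.
  apply (alg2 (cD Dt (cD D1 psi) t x y) (cD Dt (cD D2 psi) t x y)
              (cD D1 V t x y) (cD D2 V t x y)
              (cD Dt (covDzb I At A1 A2 psi) t x y) (covDzb I At A1 A2 V t x y)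
              (cD D1 E t x y) (cD D2 E t x y)
              (cD D1 (cD Dt psi) t x y) (cD D2 (cD Dt psi) t x y)
              (psi t x y) (phi t x y)
              (curv I At A1 A2 Dt D1 t x y) (curv I At A1 A2 Dt D2 t x y)
              (curv I At A1 A2 D1 Dt t x y) (curv I At A1 A2 D2 Dt t x y)).
  - exact (covD_Zb I At A1 A2 Dt psi HI HA Spsi t x y It).
  - reflexivity.
  - exact (covD_zero I At A1 A2 D1 E HI HE t x y It).
  - exact (L_lin I At A1 A2 D1 Ci (RtoC 4) _ _ HI S1 S2 t x y It).
  - exact (commutator I At A1 A2 D1 Dt psi HI HA Spsi t x y It).
  - exact (covD_zero I At A1 A2 D2 E HI HE t x y It).
  - exact (L_lin I At A1 A2 D2 Ci (RtoC 4) _ _ HI S1 S2 t x y It).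
  - exact (commutator I At A1 A2 D2 Dt psi HI HA Spsi t x y It).
  - apply curv_anti.
  - apply curv_anti.
  - exact H1.
Qed.

Theorem proposition2p1
  (I : R -> Prop) (phi : R -> R -> R -> C) (At A1 A2 : R -> R -> R -> R)
  (HI : is_interval I)
  (Hphi : smoothC_on I phi)
  (HAt : smooth_on I At) (HA1 : smooth_on I A1) (HA2 : smooth_on I A2)
  (H1 : forall t x y, I t ->
     F_tzb I At A1 A2 t x y = Cconj (phi t x y) * covDzb I At A1 A2 phi t x y)
  (H2 : forall t x y, I t ->
     F_zzb I At A1 A2 t x y = / (RtoC 4 * Ci) * RtoC (Cmod (phi t x y) ^ 2)%R)
  (H3 : forall t x y, I t ->
     Ci * covD I At A1 A2 Dt phi t x y
     + RtoC 4 * covDz I At A1 A2 (covDzb I At A1 A2 phi) t x y = RtoC 0) :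
  (forall t x y, I t ->
     Ci * covD I At A1 A2 Dt (covDzb I At A1 A2 phi) t x y
     + RtoC 4 * covDz I At A1 A2 (covDzb I At A1 A2 (covDzb I At A1 A2 phi)) t x y
     = RtoC 0) /\
  (forall t x y, I t ->
     Ci * covD I At A1 A2 Dt (covDzb I At A1 A2 (covDzb I At A1 A2 phi)) t x y
     + RtoC 4 * covDzb I At A1 A2
         (covDz I At A1 A2 (covDzb I At A1 A2 (covDzb I At A1 A2 phi))) t x y
     + Cconj (phi t x y) * (covDzb I At A1 A2 phi t x y * covDzb I At A1 A2 phi t x y)
     = RtoC 0).
Proof.
  assert (HA : HypA I At A1 A2) by (split; auto).
  assert (Sp : SC I phi) by (destruct Hphi; split; apply G_base; auto).
  assert (S1 := step1 I At A1 A2 phi HI HA Sp H1 H2 H3).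
  split; [exact S1|].
  exact (step2 I At A1 A2 phi HI HA Sp H1 S1).
Qed.
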